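(* Consider the network setting of the context for every depth $L$, and assume: (i) for each $L$, the quantities $q_\ell,\alpha_\ell,\gamma_\ell,\sigma_{\ell+1}$ ($\ell=0,\dots,L-1$) do not depend on $\ell$ (write them $q^{(L)},\alpha^{(L)},\gamma^{(L)},\sigma^{(L)}$), and each converges to a finite limit as $L\to\infty$, with $q=\lim_{L\to\infty}q^{(L)}$; (ii) the limits $\varepsilon_1=\lim_{L\to\infty}L(1-\alpha^{(L)})$ and $\varepsilon_2=-\lim_{L\to\infty}L\log((\sigma^{(L)})^2\gamma^{(L)})$ exist and $|\varepsilon_1|,|\varepsilon_2|<1$. Let $m_1(\mu)=\int x\,\mu(dx)$. Then $$\lim_{L\to\infty}L^{-1}m_1(\mu_L)=q\,\frac{1-\exp(-\varepsilon_1-\varepsilon_2)}{\varepsilon_1+\varepsilon_2},$$ where $(1-e^{-x})/x$ is interpreted as $1$ at $x=0$. In particular the limit equals $q(1-(\varepsilon_1+\varepsilon_2)/2)+O((\varepsilon_1+\varepsilon_2)^2)$ as $\varepsilon_1,\varepsilon_2\to0$.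
   Context: Network setting (depth $L$, width $M$): weights $W_\ell\in\mathbb R^{M\times M}$ with $W_\ell/\sigma_\ell$ ($\sigma_\ell>0$) independent Haar orthogonal; pointwise activations $\varphi^\ell$ continuous and differentiable except at finitely many points; $x^0=x\in\mathbb R^M$, $h^\ell=W_\ell x^{\ell-1}$, $x^\ell=\varphi^\ell(h^\ell)$, $f_\theta(x)=h^L$, $\theta=(W_1,\dots,W_L)$; $D_\ell=\partial x^\ell/\partial h^\ell$; $\hat q_\ell=\|x^\ell\|^2/M$ with $\hat q_0\to q_0>0$ and $q_\ell=\lim_{M\to\infty}\hat q_\ell$. $H_\ell=\frac1M\frac{\partial h^\ell}{\partial(W_1,\dots,W_\ell)}\frac{\partial h^\ell}{\partial(W_1,\dots,W_\ell)}^\top$ (dual conditional Fisher information matrix). Assume $(D_\ell)_{\ell=1}^{L-1}$ is asymptotically free from $(W_\ell,W_\ell^\top)_{\ell=1}^L$ as $M\to\infty$ almost surely and the limit spectral distribution of $D_\ell^2$ is $\nu_\ell=(1-\alpha_\ell)\delta_0+\alpha_\ell\delta_{\gamma_\ell}$, $0<\alpha_\ell<1$, $\gamma_\ell>0$. $\mu_\ell$ is the limit spectral distribution of $H_\ell$ as $M\to\infty$; under these assumptions $\mu_1=\delta_{q_0}$ and $\mu_{\ell+1}=(q_\ell+\sigma_{\ell+1}^2\,\cdot\,)_*(\nu_\ell\boxtimes\mu_\ell)$, with $\boxtimes$ free multiplicative convolution and $(b+a\,\cdot\,)_*$ the pushforward under $t\mapsto b+at$. *)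

(* Defs.v *)
From HB Require Import structures.
From mathcomp Require Import all_boot all_order all_algebra.
From mathcomp Require Import all_classical all_reals all_analysis.
Set Implicit Arguments. Unset Strict Implicit. Unset Printing Implicit Defensive.
Import Order.TTheory GRing.Theory Num.Theory.
Import numFieldNormedType.Exports.

Local Open Scope ring_scope.

Definition mom (R : realType) (mu : probability R R) (n : nat) : \bar R :=
  (\int[mu]_x (x ^+ n)%:E)%E.

Definition noncrossing (n : nat) (P : {set {set 'I_n}}) : bool :=
  [forall B1 in P, forall B2 in P, (B1 != B2) ==>
     ~~ [exists a : 'I_n, exists b : 'I_n, exists c : 'I_n, exists d : 'I_n,
           [&& (a < b)%N, (b < c)%N, (c < d)%N, a \in B1, c \in B1,
               b \in B2 & d \in B2]]].

Definition NC (n : nat) : {set {set {set 'I_n}}} :=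
  [set P : {set {set 'I_n}} | finset.partition P [set: 'I_n]%SET && noncrossing P].

Definition is_free_cumulants (R : realType) (mu : probability R R) (k : nat -> R) :=
  forall n : nat, (0 < n)%N ->
    mom mu n = (\sum_(P in NC n) \prod_(B in P) k #|B|)%:E.

Definition even_pos (n : nat) : {set 'I_n} := [set i : 'I_n | ~~ odd i].
Definition odd_pos (n : nat) : {set 'I_n} := [set i : 'I_n | odd i].

(* rho = nu boxtimes mu: the moments of rho are those of a*b with a ~ nu, b ~ mu
   free, given by the mixed-cumulant formula over NC(2n) for the word abab...ab
   (a at even positions, b at odd positions), mixed free cumulants vanishing. *)
Definition is_free_mult_conv (R : realType) (nu mu rho : probability R R) :=
  exists kn km : nat -> R,
    is_free_cumulants nu kn /\ is_free_cumulants mu km /\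
    forall n : nat, (0 < n)%N ->
      mom rho n =
      (\sum_(P in NC (2 * n)) \prod_(B in P)
          (if B \subset even_pos (2 * n) then kn #|B|
           else if B \subset odd_pos (2 * n) then km #|B| else 0))%:E.

Definition phi_exp (R : realType) (x : R) : R :=
  if x == 0 then 1 else (1 - expR (- x)) / x.

(* Main.v *)
Require Import Defs.
From HB Require Import structures.
From mathcomp Require Import all_boot all_order all_algebra.
From mathcomp Require Import all_classical all_reals all_analysis.
From mathcomp Require Import ring lra zify.
From mathcomp Require Import measurable_realfun.
From Stdlib Require Import Lia.
Import Order.TTheory GRing.Theory Num.Theory.
Import numFieldNormedType.Exports.
Local Open Scope ring_scope.

Lemma noncrossing_small (n : nat) (P : {set {set 'I_n}}) : (n < 4)%N -> noncrossing P.
Proof.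
move=> n4; apply/forall_inP => B1 _; apply/forall_inP => B2 _; apply/implyP => _.
apply/negP => /existsP[a /existsP[b /existsP[c /existsP[d /and3P[ab bc /andP[cd _]]]]]].
have := ltn_ord d; move: ab bc cd n4; lia.
Qed.

Lemma I1_set (B : {set 'I_1}) : B = finset.set0 \/ B = [set: 'I_1].
Proof.
case: (boolP (ord0 \in B)) => h; [right|left]; apply/setP => i; rewrite (ord1 i).
  by rewrite h inE.
by rewrite (negbTE h) inE.
Qed.

Lemma NC1E : NC 1 = [set [set [set: 'I_1]]].
Proof.
apply/setP => P; rewrite !inE.
apply/idP/idP.
  move=> /andP[/and3P[/eqP hcov htriv h0] _].
  have allT : forall B, B \in P -> B = [set: 'I_1].
    move=> B BP; case: (I1_set B) => // B0.
    by move: h0; rewrite -B0 BP.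
  apply/eqP/setP => B; rewrite inE.
  apply/idP/idP; first by move=> /allT ->.
  move/eqP => ->.
  have : ord0 \in finset.cover P by rewrite hcov inE.
  by case/bigcupP => B' B'P _; rewrite -(allT _ B'P).
move/eqP => ->.
rewrite noncrossing_small // andbT.
rewrite /finset.partition finset.cover1 eqxx finset.trivIset1 /= inE.
apply/negP => /eqP /setP /(_ ord0); rewrite !inE.
by [].
Qed.

Lemma sum_NC1 (R : ringType) (k : nat -> R) :
  \sum_(P in NC 1) \prod_(B in P) k #|B| = k 1%N.
Proof. by rewrite NC1E big_set1 big_set1 cardsT card_ord. Qed.

Lemma I2_elt (i : 'I_2) : i = ord0 \/ i = ord_max.
Proof. by case: i => [[|[|//]]] Hi; [left|right]; apply/val_inj. Qed.

Lemma I2_set (B : {set 'I_2}) :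
  [\/ B = finset.set0, B = [set ord0], B = [set ord_max] | B = [set: 'I_2]].
Proof.
case h0 : (ord0 \in B); case h1 : (ord_max \in B).
- apply: Or44; apply/setP => i; case: (I2_elt i) => ->; by rewrite inE ?h0 ?h1.
- apply: Or42; apply/setP => i; case: (I2_elt i) => ->; by rewrite !inE ?h0 ?h1.
- apply: Or43; apply/setP => i; case: (I2_elt i) => ->; by rewrite !inE ?h0 ?h1.
- apply: Or41; apply/setP => i; case: (I2_elt i) => ->; by rewrite !inE ?h0 ?h1.
Qed.

Definition P1 : {set {set 'I_2}} := [set [set ord0]; [set ord_max]].

Lemma o01 : (ord0 : 'I_2) != ord_max. Proof. by []. Qed.

Lemma P1_NC : P1 \in NC 2.
Proof.
rewrite inE noncrossing_small // andbT /finset.partition.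
apply/and3P; split.
- apply/eqP/setP => i; rewrite inE; apply/bigcupP.
  case: (I2_elt i) => ->.
    by exists [set ord0]; rewrite ?inE ?eqxx.
  by exists [set ord_max]; rewrite ?inE ?eqxx ?orbT.
- apply/finset.trivIsetP => A B; rewrite !inE => /orP[] /eqP -> /orP[] /eqP ->;
    rewrite ?eqxx // => _; by rewrite disjoints1 inE.
- rewrite !inE; apply/negP => /orP[] /eqP /setP.
    by move=> /(_ ord0); rewrite !inE.
  by move=> /(_ ord_max); rewrite !inE.
Qed.

Lemma NC2_T (P : {set {set 'I_2}}) : P \in NC 2 -> P != P1 -> [set: 'I_2] \in P.
Proof.
rewrite inE => /andP[/and3P[/eqP hcov htriv h0] _] hne.
apply/negPn/negP => hT; move/negP: hne; apply; apply/eqP.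
have cls : forall B, B \in P -> B = [set ord0] \/ B = [set ord_max].
  move=> B BP; case: (I2_set B) => E; try by [left|right].
    by move: h0; rewrite -E BP.
  by move: hT; rewrite -E BP.
apply/setP => B; rewrite !inE; apply/idP/idP.
  by move=> /cls [] ->; rewrite eqxx ?orbT.
move=> /orP[] /eqP ->.
  have : ord0 \in finset.cover P by rewrite hcov inE.
  case/bigcupP => B' B'P; case: (cls _ B'P) => E; rewrite E in B'P * => //.
  by rewrite inE.
have : ord_max \in finset.cover P by rewrite hcov inE.
case/bigcupP => B' B'P; case: (cls _ B'P) => E; rewrite E in B'P * => //.
by rewrite inE.
Qed.

Lemma sum_NC2 (R : comRingType) (kn km : nat -> R) :
  \sum_(P in NC 2) \prod_(B in P)
     (if B \subset even_pos 2 then kn #|B|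
      else if B \subset odd_pos 2 then km #|B| else 0) = kn 1%N * km 1%N.
Proof.
rewrite (bigD1 P1) ?P1_NC //= [X in _ + X]big1 ?addr0; last first.
  move=> P /andP[PNC hne].
  rewrite (bigD1 [set: 'I_2]) ?NC2_T //=.
  have -> : [set: 'I_2] \subset even_pos 2 = false.
    by apply/negbTE/subsetPn; exists ord_max; rewrite inE.
  have -> : [set: 'I_2] \subset odd_pos 2 = false.
    by apply/negbTE/subsetPn; exists ord0; rewrite inE.
  by rewrite mul0r.
rewrite /P1 big_setU1 /=; last by rewrite inE; apply/negP => /eqP /setP /(_ ord0); rewrite !inE.
rewrite big_set1 !cards1.
have -> : [set ord0] \subset even_pos 2 by rewrite finset.sub1set inE.
have -> : [set ord_max] \subset even_pos 2 = false by rewrite finset.sub1set inE.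
have -> : [set ord_max] \subset odd_pos 2 by rewrite finset.sub1set inE.
by [].
Qed.

Local Open Scope classical_set_scope.

Lemma geo_tail (R : realType) (a : R) (n : nat) : 0 <= a <= 1/2 ->
  \sum_(k < n) a ^+ (k + 3) <= 2 * a ^+ 3 - 2 * a ^+ (n + 3).
Proof.
move=> /andP[a0 a1]; elim: n => [|n IH]; first by rewrite big_ord0 add0n subrr.
rewrite big_ord_recr /=.
have h : 2 * a ^+ (n.+1 + 3) <= a ^+ (n + 3).
  by rewrite addSn exprS mulrA ler_piMl ?exprn_ge0 //; lra.
lra.
Qed.

Lemma partial_exp (R : realType) (y : R) (m : nat) : `|y| <= 1/2 ->
  `|series (exp_coeff y) (3 + m)%N - (1 + y + y ^+ 2 / 2)| <= 2 * `|y| ^+ 3.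
Proof.
move=> hy.
rewrite /series /= big_mkord big_split_ord /=.
have -> : \sum_(i < 3) exp_coeff y (lshift m i) = 1 + y + y ^+ 2 / 2.
  rewrite !big_ord_recr big_ord0 /= /exp_coeff /=.
  rewrite expr0 expr1 !factE /=. 
  lra.
rewrite addrC addrK.
apply: le_trans (ler_norm_sum _ _ _) _.
have G := @geo_tail R `|y| m.
have hG : 0 <= `|y| <= 1/2 by rewrite normr_ge0 hy.
have := G hG.
have : 0 <= `|y| ^+ (m + 3) by rewrite exprn_ge0.
move=> h1 h2.
apply: le_trans (_ : _ <= \sum_(k < m) `|y| ^+ (k + 3)) _; last by lra.
apply: ler_sum => i _.
rewrite /exp_coeff /= normrM normrX addnC.
rewrite -[X in _ <= X]mulr1 ler_wpM2l ?exprn_ge0 //.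
rewrite normrV ?unitfE ?pnatr_eq0 -?lt0n ?fact_gt0 //.
rewrite ger0_norm // invf_le1 ?ltr0n ?fact_gt0 // ler1n fact_gt0 //.
Qed.

Lemma exp_taylor2 (R : realType) (y : R) : `|y| <= 1/2 ->
  `|expR y - (1 + y + y ^+ 2 / 2)| <= 2 * `|y| ^+ 3.
Proof.
move=> hy.
set c := 1 + y + y ^+ 2 / 2.
have near3 : \forall n \near \oo, `|series (exp_coeff y) n - c| <= 2 * `|y| ^+ 3.
  exists 3%N => // n /= Hn.
  by rewrite -(subnKC Hn); apply: partial_exp.
have cv := is_cvg_series_exp_coeff y.
rewrite ler_norml; apply/andP; split.
- rewrite lerBrDr; rewrite /expR.
  apply: limr_ge => //.
  near=> n.
  have : `|series (exp_coeff y) n - c| <= 2 * `|y| ^+ 3 by near: n.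
  rewrite ler_norml => /andP[h1 h2]; lra.
- rewrite lerBlDr; rewrite /expR.
  apply: limr_le => //.
  near=> n.
  have : `|series (exp_coeff y) n - c| <= 2 * `|y| ^+ 3 by near: n.
  rewrite ler_norml => /andP[h1 h2]; lra.
Unshelve. all: by end_near.
Qed.

Lemma phi_taylor (R : realType) (x : R) : `|x| <= 1/2 ->
  `|phi_exp x - (1 - x / 2)| <= 2 * x ^+ 2.
Proof.
move=> hx; rewrite /phi_exp; case: eqP => [->|/eqP x0].
  by rewrite mul0r subr0 subrr normr0 mulr_ge0 ?sqr_ge0.
have h := @exp_taylor2 R (- x); rewrite normrN in h; have {}h := h hx.
have -> : (1 - expR (- x)) / x - (1 - x / 2) =
   - (expR (- x) - (1 + - x + (- x) ^+ 2 / 2)) / x.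
  by field.
rewrite normrM normrN normrV ?unitfE // -ler_pdivlMr ?invr_gt0 ?normr_gt0 //.
rewrite invrK.
apply: (le_trans h).
have e : x ^+ 2 = `|x| ^+ 2 by rewrite real_normK // num_real.
by rewrite e le_eqVlt; apply/orP; left; apply/eqP; ring.
Qed.

Lemma phi_cvg (R : realType) (T : Type) (F : set_system T) {FF : Filter F}
  (u : T -> R) (x0 : R) :
  u x @[x --> F] --> x0 -> phi_exp (u x) @[x --> F] --> phi_exp x0.
Proof.
have [->|x0n] := eqVneq x0 0 => hu.
  apply/cvgrPdist_le => e e0.
  have e1 : 0 < Num.min (1/2) (e/4) by rewrite lt_min; apply/andP; split; lra.
  move/cvgrPdist_lt : hu => /(_ _ e1).
  apply: filterS => x.
  rewrite sub0r normrN lt_min => /andP[h1 h2].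
  have := @phi_taylor R _ (ltW h1).
  have hp : phi_exp (0 : R) = 1 by rewrite /phi_exp eqxx.
  rewrite hp.
  have hx2 : u x ^+ 2 <= `|u x| / 2.
    rewrite -real_normK ?num_real // expr2.
    have := ler_wpM2l (normr_ge0 (u x)) (ltW h1).
    lra.
  rewrite !ler_norml => /andP[a b].
  have : `|u x| <= e / 4 by exact: ltW.
  have := ler_norm (u x).
  have := normr_ge0 (u x).
  have := ler_norm (- u x); rewrite normrN.
  lra.
have hne := cvgr_neq0 x0 hu x0n.
have hpsi : (fun x => (1 - expR (- u x)) / u x) @ F --> (1 - expR (- x0)) / x0.
  apply: cvgM; last exact: cvgV.
  apply: cvgB; first exact: cvg_cst.
  apply: continuous_cvg; first exact: continuous_expR.
  exact: cvgN.
rewrite /phi_exp (negbTE x0n).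
apply: cvg_trans hpsi.
apply: near_eq_cvg.
have FF2 : Filter (nbhs F) := FF.
move: (hne FF); apply: filterS => x /negbTE -> //.
Qed.

Lemma avg_phi (R : realType) (L : nat) (c : R) : (0 < L)%N -> 0 < c ->
  let t := - (L%:R * ln c) in
  (L%:R)^-1 * \sum_(k < L) c ^+ k = phi_exp t / phi_exp (t / L%:R).
Proof.
move=> L0 c0 t.
have L0' : (L%:R : R) != 0 by rewrite pnatr_eq0 -lt0n.
have hc : c = expR (- (t / L%:R)).
  by rewrite /t mulNr opprK mulrC mulKf // lnK // posrE.
have [t0|t0] := eqVneq t 0.
  rewrite t0 mul0r /phi_exp eqxx divr1.
  have c1 : c = 1 by rewrite hc t0 mul0r oppr0 expR0.
  rewrite c1 (eq_bigr (fun _ => 1)) ?big_const ?card_ord; last by move=> i _; rewrite expr1n.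
  by rewrite -Monoid.iteropE /= -mulr_natr mul1r mulVf.
have s0 : t / L%:R != 0 by rewrite mulf_neq0 // invr_eq0.
rewrite /phi_exp (negbTE t0) (negbTE s0).
have cL : expR (- t) = c ^+ L.
  by rewrite hc -expRM_natl mulrN mulrC mulfVK.
have c1 : c != 1.
  apply/eqP => c1; move: s0; rewrite hc in c1.
  by move: c1; rewrite -expR0 => /expR_inj /eqP; rewrite oppr_eq0 => ->.
have e := subrX1 c L.
rewrite cL -hc.
have hs : \sum_(i < L) c ^+ i = (c ^+ L - 1) / (c - 1).
  by rewrite e mulrC mulrA mulVf ?mul1r // subr_eq0.
rewrite hs.
field.
by rewrite L0' (t0 : - (L%:R * ln c) != 0) !subr_eq0 [1 == c]eq_sym c1.
Qed.

Lemma main_limit (R : realType) (q alpha gamma sigma : nat -> R) (qlim eps1 eps2 : R) :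
 (forall L, 0 < alpha L < 1) -> (forall L, 0 < gamma L) -> (forall L, 0 < sigma L) ->
 q @ \oo --> qlim ->
 (fun L => L%:R * (1 - alpha L)) @ \oo --> eps1 ->
 (fun L => - (L%:R * ln (sigma L ^+ 2 * gamma L))) @ \oo --> eps2 ->
 (fun L => (L%:R)^-1 * (q L * \sum_(k < L) (sigma L ^+ 2 * (alpha L * gamma L)) ^+ k))
   @ \oo --> qlim * phi_exp (eps1 + eps2).
Proof.
move=> ha hg hs hq h1 h2.
have hinv : (fun n : nat => (n%:R : R)^-1) @ \oo --> 0.
  by rewrite -cvg_shiftS; exact: cvg_harmonic.
have hA1 : (fun L => 1 - alpha L) @ \oo --> 0.
  have H : (fun L => L%:R * (1 - alpha L) * (L%:R)^-1) @ \oo --> eps1 * 0.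
    exact: cvgM h1 hinv.
  rewrite mulr0 in H.
  apply: cvg_trans H; apply: near_eq_cvg.
  near=> L => /=.
  have L0 : (L%:R : R) != 0 by rewrite pnatr_eq0 -lt0n; near: L; exists 1%N.
  by rewrite mulrC mulKf.
have halpha : alpha @ \oo --> (1 : R).
  have H : (fun L => 1 - (1 - alpha L)) @ \oo --> (1 - 0 : R).
    exact: cvgB (cvg_cst (1 : R)) hA1.
  rewrite subr0 in H.
  have E : (fun L => 1 - (1 - alpha L)) = alpha by apply/funext => L /=; rewrite subKr.
  by rewrite E in H.
have hla : (fun L => - (L%:R * ln (alpha L))) @ \oo --> eps1.
  have hup : (fun L => L%:R * (1 - alpha L) * (alpha L)^-1) @ \oo --> eps1.
    have H : (fun L => L%:R * (1 - alpha L) * (alpha L)^-1) @ \oo --> eps1 * 1^-1.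
      exact: cvgM h1 (cvgV (oner_neq0 R) halpha).
    by rewrite invr1 mulr1 in H.
  apply: (squeeze_cvgr _ h1 hup).
  near=> L.
  have [a0 a1] := andP (ha L).
  have Lge : (0 : R) <= L%:R by rewrite ler0n.
  apply/andP; split.
    rewrite -mulrN ler_wpM2l //.
    have := @le_ln1Dx R (alpha L - 1).
    rewrite (_ : 1 + (alpha L - 1) = alpha L); last by ring.
    move=> H; have := H ltac:(lra); lra.
  rewrite -mulrN -mulrA ler_wpM2l //.
  have := @le_ln1Dx R ((alpha L)^-1 - 1).
  rewrite (_ : 1 + ((alpha L)^-1 - 1) = (alpha L)^-1); last by ring.
  rewrite lnV ?posrE // => H.
  have ai : 0 < (alpha L)^-1 by rewrite invr_gt0.
  have := H ltac:(lra).
  have -> : (1 - alpha L) * (alpha L)^-1 = (alpha L)^-1 - 1.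
    by rewrite mulrBl mul1r mulfV // gt_eqF.
  by [].
set t := fun L => - (L%:R * ln (sigma L ^+ 2 * (alpha L * gamma L))).
have ht : t @ \oo --> eps1 + eps2.
  rewrite (_ : t = (fun L => - (L%:R * ln (alpha L)) + - (L%:R * ln (sigma L ^+ 2 * gamma L)))).
    exact: (cvgD hla h2).
  apply/funext => L; rewrite /t.
  have [a0 _] := andP (ha L).
  have s2 : 0 < sigma L ^+ 2 by rewrite exprn_gt0.
  have -> : sigma L ^+ 2 * (alpha L * gamma L) = alpha L * (sigma L ^+ 2 * gamma L) by ring.
  rewrite lnM ?posrE ?mulr_gt0 //; ring.
have hts : (fun L => t L / L%:R) @ \oo --> 0.
  have H : (fun L => t L * (L%:R)^-1) @ \oo --> (eps1 + eps2) * 0.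
    exact: cvgM ht hinv.
  by rewrite mulr0 in H.
have hp0 : phi_exp (0 : R) = 1 by rewrite /phi_exp eqxx.
have hA : (fun L => phi_exp (t L) / phi_exp (t L / L%:R)) @ \oo --> phi_exp (eps1 + eps2).
  have P1 : (fun L => phi_exp (t L / L%:R)) @ \oo --> phi_exp (0 : R).
    exact: phi_cvg hts.
  rewrite hp0 in P1.
  have H : (fun L => phi_exp (t L) * (phi_exp (t L / L%:R))^-1) @ \oo --> phi_exp (eps1 + eps2) * 1^-1.
    have P2 : (fun L => phi_exp (t L)) @ \oo --> phi_exp (eps1 + eps2).
      exact: phi_cvg ht.
    have P3 : (fun L => (phi_exp (t L / L%:R))^-1) @ \oo --> (1 : R)^-1.
      exact: cvgV (oner_neq0 R) P1.
    exact: cvgM P2 P3.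
  by rewrite invr1 mulr1 in H.
have H : (fun L => q L * (phi_exp (t L) / phi_exp (t L / L%:R))) @ \oo --> qlim * phi_exp (eps1 + eps2).
  exact: cvgM hq hA.
apply: cvg_trans H; apply: near_eq_cvg.
near=> L => /=.
have L0 : (0 < L)%N by near: L; exists 1%N.
have c0 : 0 < sigma L ^+ 2 * (alpha L * gamma L).
  have [a0 _] := andP (ha L).
  by rewrite mulr_gt0 ?exprn_gt0 ?mulr_gt0.
by rewrite [RHS]mulrCA (@avg_phi R L _ L0 c0).
Unshelve. all: by end_near.
Qed.

Section measure_part.
Local Open Scope ereal_scope.
Lemma mom1E (R : realType) (mu : probability R R) :
  mom mu 1 = \int[mu]_x x%:E.
Proof.
rewrite /mom; congr integral; apply/funext => x; by rewrite expr1.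
Qed.
Lemma mEFin (R : realType) : measurable_fun [set: R] (@EFin R).
Proof. by apply/measurable_EFinP; exact: measurable_id. Qed.
Lemma mom1_dirac (R : realType) (mu : probability R R) (a : R) :
  (forall A, measurable A -> mu A = \d_a A) -> mom mu 1 = a%:E.
Proof.
move=> h; rewrite mom1E (eq_measure_integral (\d_a)); last by move=> A mA _; exact: h.
by rewrite integral_dirac // diracE mem_set // mul1e.
Qed.

Lemma ge0_int_nu (R : realType) (nu : probability R R) (a g : R)
  (a0 : (0 <= 1 - a)%R) (a1 : (0 <= a)%R) (f : R -> \bar R) :
  (forall A, measurable A -> nu A = (1 - a)%:E * \d_(0%R : R) A + a%:E * \d_g A) ->
  measurable_fun setT f -> (forall x, 0 <= f x) ->
  \int[nu]_x f x = (1 - a)%:E * f 0%R + a%:E * f g.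
Proof.
move=> hnu mf f0.
pose m := measure_add (mscale (NngNum a0) (\d_(0%R : R))) (mscale (NngNum a1) \d_g).
rewrite (eq_measure_integral m); last first.
  move=> A mA _; apply: eq_trans (hnu A mA) _; symmetry; exact: measure_addE.
rewrite /m.
rewrite ge0_integral_measure_add //.
rewrite !ge0_integral_mscale //= !integral_dirac //.
by rewrite !diracE !mem_set // !mul1e.
Qed.

Lemma mom1_nu (R : realType) (nu : probability R R) (a g : R) :
  (0 < a < 1)%R ->
  (forall A, measurable A -> nu A = (1 - a)%:E * \d_(0%R : R) A + a%:E * \d_g A) ->
  (0 < g)%R -> mom nu 1 = (a * g)%:E.
Proof.
move=> /andP[a0 a1] hnu g0.
have a0' : (0 <= 1 - a)%R by rewrite subr_ge0 ltW.
rewrite mom1E integralE.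
rewrite (@ge0_int_nu R nu a g a0' (ltW a0) _ hnu); last 2 first.
  - by apply: measurable_funepos; apply/measurable_EFinP; exact: measurable_id.
  - by move=> x; exact: funepos_ge0.
rewrite (@ge0_int_nu R nu a g a0' (ltW a0) _ hnu); last 2 first.
  - by apply: measurable_funeneg; apply/measurable_EFinP; exact: measurable_id.
  - by move=> x; exact: funeneg_ge0.
rewrite !funeposE !funenegE /= oppr0.
have -> : maxe (0%R : R)%:E 0 = 0 by rewrite maxxx.
have -> : maxe g%:E 0 = g%:E by rewrite max_l // lee_fin ltW.
have -> : maxe (- g)%:E 0 = 0 by rewrite max_r // lee_fin oppr_le0 ltW.
by rewrite !mule0 !add0e sube0 EFinM.
Qed.

Lemma fin_integrable d (T : measurableType d) (R : realType) (mu : {measure set T -> \bar R})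
  (D : set T) (f : T -> \bar R) : measurable D -> measurable_fun D f ->
  \int[mu]_(x in D) f x \is a fin_num -> mu.-integrable D f.
Proof.
move=> mD mf; rewrite integralE fin_numB => /andP[h1 h2].
apply/integrableP; split => //.
rewrite (_ : (fun x => `|f x|) = (fun x => f^\+ x + f^\- x)); last first.
  by apply/funext => x; rewrite -/((abse \o f) x) fune_abse.
rewrite ge0_integralD //; try solve [by move=> x _; exact: funepos_ge0 | by move=> x _; exact: funeneg_ge0 | exact: measurable_funepos | exact: measurable_funeneg].
have : \int[mu]_(x in D) f^\+ x + \int[mu]_(x in D) f^\- x \is a fin_num by rewrite fin_numD h1 h2.
by move/fin_numPlt => /andP[].
Qed.

Lemma mom1_push (R : realType) (rho mu' : probability R R) (b s m : R) :
  (forall A, measurable A -> mu' A = rho ((fun t => (b + s * t)%R) @^-1` A)) ->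
  mom rho 1 = m%:E -> mom mu' 1 = (b + s * m)%:E.
Proof.
move=> hmu hrho.
pose phi := fun t : R => (b + s * t)%R.
have mphi : measurable_fun setT phi.
  by apply: measurable_funD => //; apply: measurable_funM.
pose pm := measure_function_pushforward__canonical__measure_function_Measure rho mphi.
rewrite mom1E.
have E : \int[mu']_x x%:E = \int[pm]_x x%:E.
  by apply: eq_measure_integral => A mA _; exact: hmu.
have mE : measurable_fun [set: R] (fun x : R => x%:E).
  by apply/measurable_EFinP; exact: measurable_id.
rewrite E integralE.
have P1 : \int[pm]_x ((@EFin R)^\+ x) = \int[rho]_x ((fun x : R => (phi x)%:E)^\+ x).
  have := ge0_integral_pushforward mphi rho measurableT (measurable_funepos mE)
    (fun x _ => funepos_ge0 _ x).
  move=> H.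
  have e1 : \int[pm]_x ((@EFin R)^\+ x) = \int[pushforward rho phi]_x ((@EFin R)^\+ x) by [].
  rewrite e1 H.
  have e2 : phi @^-1` setT = setT by rewrite preimage_setT.
  rewrite e2.
  by apply: eq_integral => x _ /=; rewrite !funeposE.
have P2 : \int[pm]_x ((@EFin R)^\- x) = \int[rho]_x ((fun x : R => (phi x)%:E)^\- x).
  have := ge0_integral_pushforward mphi rho measurableT (measurable_funeneg mE)
    (fun x _ => funeneg_ge0 _ x).
  move=> H.
  have e1 : \int[pm]_x ((@EFin R)^\- x) = \int[pushforward rho phi]_x ((@EFin R)^\- x) by [].
  rewrite e1 H.
  have e2 : phi @^-1` setT = setT by rewrite preimage_setT.
  rewrite e2.
  by apply: eq_integral => x _ /=; first [by rewrite !funenegE | by [] | by rewrite /funeneg].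
rewrite P1 P2 -integralE.
have iid : rho.-integrable setT (fun x : R => x%:E).
  apply: fin_integrable => //.
  by rewrite -mom1E hrho.
have icst : rho.-integrable setT (fun x : R => b%:E).
  apply: fin_integrable => //.
  rewrite integral_cst //.
  by rewrite [X in _ * X](_ : _ = 1) ?mule1 //; exact: probability_setT.
have iZ : rho.-integrable setT (fun x : R => s%:E * x%:E).
  by apply: integrableZl.
rewrite /phi (_ : (fun x => (b + s * x)%:E) = (fun x => b%:E + s%:E * x%:E)); last first.
  by apply/funext => x; rewrite EFinD EFinM.
rewrite integralD // integralZl // -mom1E hrho.
rewrite (_ : (fun x : R => b%:E) = cst b%:E) // integral_cst //.
rewrite [X in _ * X](_ : _ = 1) ?mule1; last exact: probability_setT.
by rewrite -EFinM -EFinD.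
Qed.

End measure_part.
Theorem proposition4p4 (R : realType)
  (q alpha gamma sigma : nat -> R)
  (nu : nat -> probability R R)
  (mu rho : nat -> nat -> probability R R)
  (qlim eps1 eps2 : R) :
  (* standing assumptions of the setting, for every depth L *)
  (forall L, 0 < q L) ->
  (forall L, 0 < alpha L < 1) ->
  (forall L, 0 < gamma L) ->
  (forall L, 0 < sigma L) ->
  (* nu L = (1 - alpha) delta_0 + alpha delta_gamma *)
  (forall L (A : set R), measurable A ->
     nu L A = ((1 - alpha L)%R%:E * \d_(0%R : R) A + (alpha L)%:E * \d_(gamma L) A)%E) ->
  (* mu_1 = delta_{q_0} *)
  (forall L (A : set R), (1 <= L)%N -> measurable A -> mu L 1%N A = \d_(q L) A) ->
  (* mu_{l+1} = (q + sigma^2 .)_* (nu boxtimes mu_l), l = 1 .. L-1 *)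
  (forall L l, (1 <= l)%N -> (l < L)%N -> is_free_mult_conv (nu L) (mu L l) (rho L l)) ->
  (forall L l (A : set R), (1 <= l)%N -> (l < L)%N -> measurable A ->
     mu L l.+1 A = rho L l ((fun t => q L + sigma L ^+ 2 * t) @^-1` A)) ->
  (* (i) convergence of the parameters *)
  cvg (q @ \oo) -> cvg (alpha @ \oo) -> cvg (gamma @ \oo) -> cvg (sigma @ \oo) ->
  qlim = lim (q @ \oo) ->
  (* (ii) *)
  (fun L => L%:R * (1 - alpha L)) @ \oo --> eps1 ->
  (fun L => - (L%:R * ln (sigma L ^+ 2 * gamma L))) @ \oo --> eps2 ->
  `|eps1| < 1 -> `|eps2| < 1 ->
  ((fun L => ((L%:R)^-1)%:E * mom (mu L L) 1)%E @ \oo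
     --> (qlim * phi_exp (eps1 + eps2))%:E)
  /\
  (exists C delta : R, 0 < delta /\
     forall x : R, `|x| < delta ->
       `|qlim * phi_exp x - qlim * (1 - x / 2)| <= C * x ^+ 2).
Proof.
move=> hq ha hg hs hnu hmu1 hconv hmu hcq hca hcg hcs hqlim h1 h2 he1 he2.
split; last first.
  exists (2 * `|qlim|), (1/2); split; first lra.
  move=> x hx.
  rewrite -mulrBr normrM.
  have := @phi_taylor R x (ltW hx) => H.
  have := ler_wpM2l (normr_ge0 qlim) H.
  by rewrite mulrA [`|qlim| * 2]mulrC.
pose c L := sigma L ^+ 2 * (alpha L * gamma L).
have key : forall L l, (1 <= l <= L)%N ->
    mom (mu L l) 1 = (q L * \sum_(k < l) c L ^+ k)%:E.
  move=> L; elim => [|l IH] // hb.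
  case: l IH hb => [|l] IH hb.
    rewrite big_ord1 expr0 mulr1.
    by apply: mom1_dirac => A mA; exact: hmu1.
  have hl1 : (1 <= l.+1)%N by [].
  have hlL' : (l.+1 < L)%N by case/andP: hb.
  have {}IH := IH ltac:(by rewrite hl1 (ltnW hlL')).
  have [kn [km [hkn [hkm hrho]]]] := hconv L l.+1 hl1 hlL'.
  have en : kn 1%N = alpha L * gamma L.
    have := hkn 1%N isT; rewrite sum_NC1 (@mom1_nu R (nu L) _ _ (ha L) (hnu L) (hg L)).
    by move=> [].
  have em : km 1%N = q L * \sum_(k < l.+1) c L ^+ k.
    by have := hkm 1%N isT; rewrite sum_NC1 IH => -[].
  have er : mom (rho L l.+1) 1 = (kn 1%N * km 1%N)%:E.
    by rewrite (hrho 1%N isT) (@sum_NC2 R kn km).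
  rewrite (@mom1_push R (rho L l.+1) (mu L l.+2) _ _ _ (fun A mA => hmu L l.+1 A hl1 hlL' mA) er) en em.
  congr (_%:E).
  rewrite [in RHS]big_ord_recl expr0 /=.
  under [in RHS]eq_bigr do rewrite exprS.
  rewrite -mulr_sumr /c; ring.
have hq' : q @ \oo --> qlim by rewrite hqlim; exact: hcq.
have ML := @main_limit R q alpha gamma sigma qlim eps1 eps2 ha hg hs hq' h1 h2.
apply: cvg_EFin.
  near=> L.
  have L1 : (1 <= L)%N by near: L; exists 1%N.
  by rewrite (key L L) ?L1 ?leqnn // -EFinM.
apply: cvg_trans ML; apply: near_eq_cvg.
near=> L.
have L1 : (1 <= L)%N by near: L; exists 1%N.
by rewrite /= (key L L) ?L1 ?leqnn.
Unshelve. all: by end_near.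
Qed.
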